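(* For any finite alphabet $\mathcal{X}$ with $|\mathcal{X}|\ge2$ and any pmf $P$ on $\mathcal{X}$, the minimum average age $\bar A^*=\inf_e \bar A(e)$ over all prefix-free codes $e:\mathcal{X}\to\{0,1\}^*$ satisfies $$\frac32 H(P)-\frac12\le \bar A^*\le \frac32\log_2|\mathcal{X}|+1,$$ where $H(P)=-\sum_x P(x)\log_2 P(x)$.
   Context: For a prefix-free code $e$ with codeword lengths $\ell(x)$ and $L=\ell(X)$, $X\sim P$, the average age of the (deterministic) memoryless update scheme is $\bar A(e)=\mathbb{E}[L]+\frac{\mathbb{E}[L^2]}{2\mathbb{E}[L]}-\frac12$. *)

(* Defs.v *)
From mathcomp Require Import all_boot.
From Stdlib Require Import Reals.
Set Implicit Arguments. Unset Strict Implicit. Unset Printing Implicit Defensive.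

Local Open Scope R_scope.

Definition Rsum (X : finType) (F : X -> R) : R := \big[Rplus/0]_(x : X) F x.

Definition is_pmf (X : finType) (P : X -> R) : Prop :=
  (forall x, 0 <= P x) /\ Rsum P = 1.

Definition prefix_free (X : finType) (e : X -> seq bool) : Prop :=
  forall x y : X, x <> y -> ~~ prefix (e x) (e y).

Definition log2 (x : R) : R := ln x / ln 2.

(* Shannon entropy in bits (ln 0 = 0 in Stdlib, so 0 log 0 = 0) *)
Definition entropy (X : finType) (P : X -> R) : R :=
  - Rsum (fun x => P x * log2 (P x)).

Definition EL (X : finType) (P : X -> R) (e : X -> seq bool) : R :=
  Rsum (fun x => P x * INR (size (e x))).
Definition EL2 (X : finType) (P : X -> R) (e : X -> seq bool) : R :=
  Rsum (fun x => P x * (INR (size (e x)))^2).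

(* average age of the memoryless update scheme *)
Definition avg_age (X : finType) (P : X -> R) (e : X -> seq bool) : R :=
  EL P e + EL2 P e / (2 * EL P e) - 1/2.

Definition is_inf (S : R -> Prop) (m : R) : Prop :=
  (forall a, S a -> m <= a) /\ (forall b, (forall a, S a -> b <= a) -> b <= m).

Definition ages (X : finType) (P : X -> R) : R -> Prop :=
  fun a => exists e : X -> seq bool, prefix_free e /\ a = avg_age P e.

(* Main.v *)
Require Import Defs.
From HB Require Import structures.
From mathcomp Require Import all_boot.
From Stdlib Require Import Reals Lra.
Set Implicit Arguments. Unset Strict Implicit.

Local Open Scope R_scope.

Lemma Rplus_assoc' : associative Rplus.
Proof. by move=> x y z; rewrite Rplus_assoc. Qed.
HB.instance Definition _ := Monoid.isComLaw.Build R 0%R Rplus Rplus_assoc' Rplus_comm Rplus_0_l.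

Lemma bigR_scal (X : finType) (A : pred X) (c : R) (F : X -> R) :
  c * \big[Rplus/0]_(x | A x) F x = \big[Rplus/0]_(x | A x) (c * F x).
Proof.
apply: (big_endo (fun y => c * y)); first by move=> a b; rewrite Rmult_plus_distr_l.
by rewrite Rmult_0_r.
Qed.

Lemma bigR_le (X : finType) (A : pred X) (F G : X -> R) :
  (forall x, A x -> F x <= G x) ->
  \big[Rplus/0]_(x | A x) F x <= \big[Rplus/0]_(x | A x) G x.
Proof.
move=> H; apply: (big_ind2 (fun a b => a <= b)) => //; first lra.
by move=> *; apply: Rplus_le_compat.
Qed.

Lemma prefix_behead (s t : seq bool) : s <> [::] -> t <> [::] ->
  head false s = head false t -> prefix s t = prefix (behead s) (behead t).
Proof. by case: s => // a s; case: t => // b t _ _ /= ->; rewrite eqxx. Qed.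

Lemma kraft_gen (X : finType) (n : nat) : forall (e : X -> seq bool) (A : pred X),
  (forall x, A x -> leq (size (e x)) n) ->
  (forall x y, A x -> A y -> x <> y -> ~~ prefix (e x) (e y)) ->
  \big[Rplus/0]_(x | A x) (/2)^(size (e x)) <= 1.
Proof.
elim: n => [|n IH] e A Hs Hp.
all: case: (pickP (fun x => A x && (e x == [::]))) => [x0 /andP[Ax0 /eqP ex0] | Hn].
- rewrite (bigD1 x0) //= ex0 /= big1; first lra.
  move=> y /andP[Ay ny]; exfalso; move/eqP: ny => ny.
  by move: (Hp x0 y Ax0 Ay (fun h => ny (esym h))); rewrite ex0; case: (e y).
- rewrite big1; first lra.
  move=> x Ax; have := Hn x; rewrite Ax /=; have := Hs x Ax.
  by case: (e x).
- rewrite (bigD1 x0) //= ex0 /= big1; first lra.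
  move=> y /andP[Ay ny]; exfalso; move/eqP: ny => ny.
  by move: (Hp x0 y Ax0 Ay (fun h => ny (esym h))); rewrite ex0; case: (e y).
- have ne : forall x, A x -> e x <> [::].
    by move=> x Ax E; have := Hn x; rewrite Ax E.
  rewrite (bigID (fun x => head false (e x))) /=.
  have step : forall b : bool,
     \big[Rplus/0]_(x | A x && (if b then head false (e x) else ~~ head false (e x))) (/2)^(size (e x))
     <= /2.
    move=> b.
    apply: Rle_trans (_ : \big[Rplus/0]_(x | A x && (if b then head false (e x) else ~~ head false (e x)))
         (/2 * (/2)^(size (behead (e x)))) <= _).
      apply: bigR_le => x /andP[Ax _]; move: (ne x Ax); case: (e x) => //= a s _; lra.
    rewrite -bigR_scal.
    have : \big[Rplus/0]_(x | A x && (if b then head false (e x) else ~~ head false (e x)))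
         (/2)^(size (behead (e x))) <= 1.
      apply: (IH (fun x => behead (e x))).
        move=> x /andP[Ax _]; rewrite size_behead; have := Hs x Ax; case: (size (e x)) => //.
      move=> x y /andP[Ax hx] /andP[Ay hy] nxy.
      rewrite -prefix_behead; [exact: Hp | exact: ne | exact: ne|].
      by case: b hx hy; case: (head false (e x)); case: (head false (e y)).
    lra.
  have := step true; have := step false; simpl; lra.
Qed.

Lemma Rsum_lin (X : finType) (a b : R) (F G : X -> R) :
  Rsum (fun x => a * F x + b * G x) = a * Rsum F + b * Rsum G.
Proof.
rewrite /Rsum big_split /=.
have sc : forall c (H : X -> R), c * \big[Rplus/0]_(x : X) H x = \big[Rplus/0]_(x : X) (c * H x).
  move=> c H; apply: (big_endo (fun y => c * y)); last by rewrite Rmult_0_r.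
  by move=> u v; rewrite Rmult_plus_distr_l.
by rewrite !sc.
Qed.

Lemma Rsum_le (X : finType) (F G : X -> R) :
  (forall x, F x <= G x) -> Rsum F <= Rsum G.
Proof.
move=> H; apply: (big_ind2 (fun a b => a <= b)) => //; first lra.
by move=> *; apply: Rplus_le_compat.
Qed.

Lemma Rsum_ext (X : finType) (F G : X -> R) :
  (forall x, F x = G x) -> Rsum F = Rsum G.
Proof. by move=> H; apply: eq_bigr. Qed.

Lemma kraft (X : finType) (e : X -> seq bool) : prefix_free e ->
  Rsum (fun x => (/2)^(size (e x))) <= 1.
Proof.
move=> Hp.
have := (@kraft_gen X (\max_(x : X) size (e x)) e (fun _ => true)); apply.
  by move=> x _; exact: (@leq_bigmax X (fun x => size (e x)) x).
by move=> x y _ _; apply: Hp.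
Qed.

Lemma ln2_pos : 0 < ln 2.
Proof. have := ln_lt_2; lra. Qed.

Lemma EL_ge_H (X : finType) (P : X -> R) (e : X -> seq bool) :
  is_pmf P -> prefix_free e -> entropy P <= EL P e.
Proof.
move=> [P0 P1] Hp.
have l2 := ln2_pos.
have key : forall x, -1 * (P x * log2 (P x)) + -1 * (P x * INR (size (e x)))
                      <= / ln 2 * ((/2)^(size (e x))) + (- / ln 2) * P x.
  move=> x; set l := size (e x).
  have qpos : 0 < (/2)^l by apply: pow_lt; lra.
  have il : 0 < / ln 2 by apply: Rinv_0_lt_compat.
  case: (Req_dec (P x) 0) => [->|Pnz].
    rewrite /log2; nra.
  have Pp : 0 < P x by have := P0 x; lra.
  have Lq : ln ((/2)^l) = - (INR l * ln 2).
    rewrite ln_pow; last lra. rewrite ln_Rinv; [ring|lra].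
  have LL : ln ((/2)^l * / P x) = - (INR l * ln 2) - ln (P x).
    rewrite ln_mult //; last by apply: Rinv_0_lt_compat.
    rewrite Lq ln_Rinv //; ring.
  have Hle : ln ((/2)^l * / P x) <= (/2)^l * / P x - 1.
    have := exp_ineq1_le (ln ((/2)^l * / P x)).
    rewrite exp_ln; first lra.
    by apply: Rmult_lt_0_compat => //; apply: Rinv_0_lt_compat.
  have E1 : P x * ((/2)^l * / P x) = (/2)^l by field; lra.
  have H2 : P x * ln ((/2)^l * / P x) <= (/2)^l - P x.
    have := Rmult_le_compat_l (P x) _ _ (Rlt_le _ _ Pp) Hle; lra.
  have E2 : -1 * (P x * log2 (P x)) + -1 * (P x * INR l)
            = / ln 2 * (P x * ln ((/2)^l * / P x)).
    rewrite LL /log2; field; lra.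
  rewrite E2.
  have := Rmult_le_compat_l (/ ln 2) _ _ (Rlt_le _ _ il) H2; lra.
have := Rsum_le key; rewrite !Rsum_lin.
have Hk := kraft Hp.
rewrite P1 /entropy /EL.
have il : 0 < / ln 2 by apply: Rinv_0_lt_compat.
nra.
Qed.

Lemma EL2_ge (X : finType) (P : X -> R) (e : X -> seq bool) :
  is_pmf P -> EL P e ^ 2 <= EL2 P e.
Proof.
move=> [P0 P1].
have H : forall m, 0 <= Rsum (fun x => P x * (INR (size (e x)) - m)^2).
  move=> m.
  apply: Rle_trans (_ : Rsum (fun x : X => 0 * 0 + 0 * 0) <= _).
    rewrite Rsum_lin; rewrite !Rmult_0_l; lra.
  apply: Rsum_le => x; rewrite Rmult_0_l Rplus_0_l; apply: Rmult_le_pos; [exact: P0 | apply: pow2_ge_0].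
have E : forall m, Rsum (fun x => P x * (INR (size (e x)) - m)^2)
   = 1 * EL2 P e + 1 * ((-2 * m) * EL P e + m^2 * Rsum P).
  move=> m; rewrite /EL /EL2 -Rsum_lin -Rsum_lin.
  apply: Rsum_ext => x; ring.
have := H (EL P e); rewrite E P1; lra.
Qed.

Lemma EL_ge1 (X : finType) (P : X -> R) (e : X -> seq bool) :
  leq 2 #|X| -> is_pmf P -> prefix_free e -> 1 <= EL P e.
Proof.
move=> H2 [P0 P1] Hp.
have ne : forall x, leq 1 (size (e x)).
  move=> x.
  case: (pickP (fun y => y != x)) => [y nyx | Hn].
  2: { exfalso.
    have : leq #|X| 1.
      rewrite -(card1 x); apply: subset_leq_card; apply/subsetP => z _.
      by rewrite inE; have := Hn z; case: eqP.
    by rewrite leqNgt H2. }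
  have nx : x <> y by move=> h; rewrite h eqxx in nyx.
  have := Hp x y nx.
  by case: (e x) => //; case: (e y).
rewrite -P1 /EL.
apply: Rsum_le => x.
have := P0 x; have := ne x; case: (size (e x)) => // k _ Pn.
rewrite S_INR; have := pos_INR k; nra.
Qed.

Lemma lower_all (X : finType) (P : X -> R) (e : X -> seq bool) :
  leq 2 #|X| -> is_pmf P -> prefix_free e ->
  3/2 * entropy P - 1/2 <= avg_age P e.
Proof.
move=> H2 Hpm Hp.
have h1 := EL_ge1 H2 Hpm Hp.
have hH := EL_ge_H Hpm Hp.
have h2 := EL2_ge e Hpm.
rewrite /avg_age.
have : EL2 P e / (2 * EL P e) >= EL P e / 2.
  apply: Rle_ge; unfold Rdiv.
  apply: (Rmult_le_reg_r (2 * EL P e)); first lra.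
  rewrite !Rmult_assoc Rinv_l; last lra.
  have -> : / 2 * (2 * EL P e) = EL P e by field.
  simpl in h2; lra.
lra.
Qed.

Lemma prefix_eq_size (s t : seq bool) : prefix s t -> size s = size t -> s = t.
Proof.
elim: s t => [|a s IH] [|b t] //= .
case: eqP => // -> H [] E; by rewrite (IH t H E).
Qed.

Lemma INR_expn2 k : INR (expn 2 k) = 2 ^ k.
Proof.
elim: k => [|k IH] //=; rewrite expnS -IH.
have -> : muln 2 (expn 2 k) = Nat.mul 2 (expn 2 k) by [].
by rewrite mult_INR.
Qed.

Lemma upper_code (X : finType) (P : X -> R) :
  leq 2 #|X| -> is_pmf P ->
  exists e, prefix_free e /\ avg_age P e <= 3/2 * log2 (INR #|X|) + 1.
Proof.
move=> H2 [P0 P1].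
set N := #|X|; set k := trunc_log 2 N.
have hN : leq N (#|{: (k.+1).-tuple bool}|).
  rewrite card_tuple card_bool; apply: ltnW; exact: trunc_log_ltn.
pose e := fun x : X => val (enum_val (widen_ord hN (enum_rank x)) : (k.+1).-tuple bool).
have sz : forall x, size (e x) = k.+1 by move=> x; rewrite /e size_tuple.
exists e; split.
  move=> x y nxy; apply/negP => Hpr.
  apply: nxy; apply: enum_rank_inj.
  have := prefix_eq_size Hpr; rewrite !sz => /(_ erefl) /val_inj /enum_val_inj.
  by move=> /(congr1 val) /= /val_inj.
have EL1 : EL P e = INR k.+1.
  rewrite /EL -(Rplus_0_r (INR k.+1)) -(Rmult_0_l (Rsum P)) -(Rmult_1_r (INR k.+1)) -P1.
  rewrite -Rsum_lin; apply: Rsum_ext => x; rewrite sz; ring.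
have EL2e : EL2 P e = INR k.+1 ^ 2.
  rewrite /EL2 -(Rplus_0_r (INR k.+1 ^ 2)) -(Rmult_0_l (Rsum P)) -(Rmult_1_r (INR k.+1 ^ 2)) -P1.
  rewrite -Rsum_lin; apply: Rsum_ext => x; rewrite sz; ring.
have Nk : 2 ^ k <= INR N.
  rewrite -INR_expn2; apply: le_INR; apply/leP; apply: trunc_logP => //.
  by apply: leq_trans H2.
have lg : INR k <= log2 (INR N).
  have p2 : 0 < 2 ^ k by apply: pow_lt; lra.
  have l2 := ln2_pos.
  have : ln (2 ^ k) <= ln (INR N).
    case: (Rle_lt_or_eq_dec _ _ Nk) => [lt|->]; last lra.
    by apply: Rlt_le; apply: ln_increasing.
  rewrite ln_pow; last lra.
  move=> h; rewrite /log2; apply: (Rmult_le_reg_r (ln 2)) => //.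
  unfold Rdiv; rewrite Rmult_assoc Rinv_l; lra.
rewrite /avg_age EL1 EL2e S_INR.
have kp := pos_INR k.
have -> : (INR k + 1) ^ 2 / (2 * (INR k + 1)) = (INR k + 1) / 2 by field; lra.
lra.
Qed.

Local Close Scope R_scope.

Theorem mainTheorem3 (X : finType) (P : X -> R) :
  (2 <= #|X|)%N -> is_pmf P ->
  exists Astar : R, is_inf (ages P) Astar /\
    (3/2 * entropy P - 1/2 <= Astar)%R /\
    (Astar <= 3/2 * log2 (INR #|X|) + 1)%R.
Proof.
move=> H2 Hpm.
have [e0 [Hp0 Hu]] := upper_code H2 Hpm.
pose E := fun y => ages P (- y)%R.
have Eb : bound E.
  exists (- (3/2 * entropy P - 1/2))%R => y [e [Hp Hy]].
  have := lower_all H2 Hpm Hp; rewrite -Hy; lra.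
have Ene : exists y, E y.
  exists (- avg_age P e0)%R; exists e0; split => //; rewrite Ropp_involutive //.
have [m [Hub Hlub]] := completeness E Eb Ene.
exists (- m)%R.
have inf1 : forall a, ages P a -> (- m <= a)%R.
  move=> a Ha; have : E (- a)%R by rewrite /E Ropp_involutive.
  move/Hub; lra.
have inf2 : forall b, (forall a, ages P a -> b <= a)%R -> (b <= - m)%R.
  move=> b Hb.
  have : (m <= - b)%R.
    apply: Hlub => y Ey; have := Hb _ Ey; lra.
  lra.
split; first by split.
split.
  apply: inf2 => a [e [Hp ->]]; exact: lower_all.
apply: Rle_trans (inf1 _ _) Hu.
by exists e0.
Qed.
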